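(* Let $(\lambda_n)_{n\ge1}$ be real numbers with $\lambda_n\in(0,1)$ for all $n$, such that $\sum_{n=1}^\infty\lambda_n=\infty$, $n\prod_{k=1}^n(1-\lambda_k)\to0$ as $n\to\infty$, and $\sum_{i=1}^n\frac{\lambda_i}{1-\lambda_i}=O(n)$. Let $(a_n)_{n\ge1}$ be a nonnegative sequence satisfying $a_n\le(1-\lambda_n)a_{n-1}+\prod_{k=1}^n(1-\lambda_k)$ for all $n\ge2$. Then $\lim_{n\to\infty}a_n=0$. *)

(* Defs.v *)
(* concrete reals R. Sequences indexed from 1; the value at 0 is ignored. *)
From Stdlib Require Import Reals.
Open Scope R_scope.

Fixpoint prod1 (f : nat -> R) (n : nat) : R :=
  match n with
  | O => 1
  | S m => prod1 f m * f (S m)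
  end.

Fixpoint sum1 (f : nat -> R) (n : nat) : R :=
  match n with
  | O => 0
  | S m => sum1 f m + f (S m)
  end.

(* Main.v *)
Require Import Defs.
From Stdlib Require Import Reals Lra Lia.
Open Scope R_scope.

Lemma prod_pos (lam : nat -> R) :
  (forall n, (1 <= n)%nat -> 0 < lam n < 1) ->
  forall n, 0 < prod1 (fun k => 1 - lam k) n.
Proof.
  intros H n; induction n as [|n IH]; simpl; [lra|].
  specialize (H (S n) ltac:(lia)). apply Rmult_lt_0_compat; lra.
Qed.

Theorem corollary3p2 (lam a : nat -> R) :
  (forall n, (1 <= n)%nat -> 0 < lam n < 1) ->
  (* sum_{n>=1} lam_n = +infinity *)
  (forall M : R, exists N : nat, M < sum1 lam N) ->
  (* n * prod_{k=1}^n (1 - lam_k) -> 0 *)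
  Un_cv (fun n => INR n * prod1 (fun k => 1 - lam k) n) 0 ->
  (* sum_{i=1}^n lam_i / (1 - lam_i) = O(n) *)
  (exists C : R, exists N0 : nat, forall n, (N0 <= n)%nat ->
      Rabs (sum1 (fun i => lam i / (1 - lam i)) n) <= C * INR n) ->
  (forall n, (1 <= n)%nat -> 0 <= a n) ->
  (forall n, (2 <= n)%nat ->
      a n <= (1 - lam n) * a (n - 1)%nat + prod1 (fun k => 1 - lam k) n) ->
  Un_cv a 0.
Proof.
  intros Hl _ Hcv _ Ha Hrec.
  set (P := prod1 (fun k => 1 - lam k)).
  assert (HP : forall n, 0 < P n) by (apply prod_pos; auto).
  set (c := a 1%nat / P 1%nat).
  assert (Hc : 0 <= c).
  { unfold c. apply Rmult_le_pos; [apply Ha; lia|]. left; apply Rinv_0_lt_compat, HP. }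
  assert (Hind : forall n, (1 <= n)%nat -> a n <= P n * (c + INR (n - 1))).
  { intros n Hn. induction n as [|n IH]; [lia|].
    destruct n as [|m].
    - simpl INR. unfold c. field_simplify; [lra|]. specialize (HP 1%nat). lra.
    - specialize (IH ltac:(lia)).
      specialize (Hrec (S (S m)) ltac:(lia)).
      replace (S (S m) - 1)%nat with (S m) in Hrec by lia.
      replace (S (S m) - 1)%nat with (S m) by lia.
      replace (S m - 1)%nat with m in IH by lia.
      assert (E : P (S (S m)) = P (S m) * (1 - lam (S (S m)))) by reflexivity.
      specialize (Hl (S (S m)) ltac:(lia)).
      rewrite S_INR. rewrite E.
      fold P in Hrec; rewrite E in Hrec.
      assert ((1 - lam (S (S m))) * a (S m) <=
              (1 - lam (S (S m))) * (P (S m) * (c + INR m))).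
      { apply Rmult_le_compat_l; lra. }
      nra. }
  assert (Hb : forall n, (1 <= n)%nat -> 0 <= a n <= (c + 1) * (INR n * P n)).
  { intros n Hn. split; [apply Ha; lia|].
    specialize (Hind n Hn).
    assert (INR (n - 1) <= INR n) by (apply le_INR; lia).
    assert (1 <= INR n) by (apply (le_INR 1); lia).
    specialize (HP n).
    assert (P n * INR (n-1) <= P n * INR n) by (apply Rmult_le_compat_l; lra).
    assert (c * P n <= c * (INR n * P n)) by (apply Rmult_le_compat_l; nra).
    nra. }
  intros eps Heps.
  destruct (Hcv (eps / (c + 1))) as [N HN].
  { apply Rdiv_lt_0_compat; lra. }
  exists (max N 1). intros n Hn.
  specialize (HN n ltac:(lia)). specialize (Hb n ltac:(lia)).
  unfold R_dist in *. rewrite Rminus_0_r in *.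
  fold P in HN.
  assert (0 <= INR n * P n) by (apply Rmult_le_pos; [apply pos_INR| left; apply HP]).
  rewrite Rabs_right in HN by lra. rewrite Rabs_right by lra.
  apply Rle_lt_trans with ((c + 1) * (INR n * P n)); [lra|].
  apply Rmult_lt_compat_l with (r := c + 1) in HN; [|lra].
  replace ((c + 1) * (eps / (c + 1))) with eps in HN by (field; lra). lra.
Qed.
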